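(* Let $H$ be a hypergraph with $R(H)=\{1,2\}$ such that the graph $H^2$ of its $2$-edges is bipartite and $H$ contains $K_2^{\{1,2\}}$ as a subgraph. Then $\pi(H)=\frac54$.
   Context: A hypergraph $H=(V,E)$ has finite vertex set $V$ and edge set $E\subseteq 2^V$; $R(H)=\{|F|:F\in E\}$. $H_1\subseteq H_2$ (subgraph) means there is an injective $f\colon V(H_1)\to V(H_2)$ with $f(F)\in E(H_2)$ for all $F\in E(H_1)$. For $G$ on $n$ vertices, $h_n(G)=\sum_{F\in E(G)}1/\binom{n}{|F|}$; $\pi_n(H)=\max\{h_n(G): G\text{ on } n \text{ vertices}, R(G)\subseteq R(H), H\not\subseteq G\}$ and $\pi(H)=\lim_n\pi_n(H)$. $K_2^{\{1,2\}}$ is the hypergraph on vertices $\{1,2\}$ with edges $\{1\},\{2\},\{1,2\}$. *)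

(* Defs.v *)
From HB Require Import structures.
From mathcomp Require Import all_boot all_order all_algebra.
From mathcomp Require Import all_classical all_reals all_analysis.
Set Implicit Arguments. Unset Strict Implicit. Unset Printing Implicit Defensive.
Import Order.TTheory GRing.Theory Num.Theory.
Local Open Scope ring_scope.

Definition subgraphb (V1 V2 : finType) (E1 : {set {set V1}}) (E2 : {set {set V2}}) : bool :=
  [exists f : {ffun V1 -> V2}, injectiveb f && [forall F in E1, (f @: F) \in E2]].

Definition in_R (V : finType) (E : {set {set V}}) (k : nat) : bool :=
  [exists F in E, #|F| == k].

Definition R_sub (V1 V2 : finType) (E1 : {set {set V1}}) (E2 : {set {set V2}}) : bool :=
  [forall F in E1, in_R E2 #|F|].

Definition h_n (R : realType) (n : nat) (G : {set {set 'I_n}}) : R :=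
  \sum_(F in G) ('C(n, #|F|)%:R)^-1.

(* π_n(H): max of h_n(G) over hypergraphs G on n vertices with R(G) ⊆ R(H)
   and H not a subgraph of G (the empty hypergraph is always admissible when
   H has an edge; h_n >= 0, so using 0 as the neutral element is harmless). *)
Definition pi_n (R : realType) (V : finType) (E : {set {set V}}) (n : nat) : R :=
  \big[Num.max/0]_(G : {set {set 'I_n}} | R_sub G E && ~~ subgraphb E G) h_n R G.

Definition K2_12 : {set {set 'I_2}} :=
  [set [set ord0]; [set ord_max]; finset.setT].

Definition two_graph_bipartite (V : finType) (E : {set {set V}}) : Prop :=
  exists A : {set V}, forall F, F \in E -> #|F| = 2%N -> #|F :&: A| = 1%N.

(* Main.v *)
Require Import Defs.
From HB Require Import structures.
From mathcomp Require Import all_boot all_order all_algebra.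
From mathcomp Require Import all_classical all_reals all_analysis.
From mathcomp Require Import zify ring lra.
Set Implicit Arguments. Unset Strict Implicit. Unset Printing Implicit Defensive.
Import Order.TTheory GRing.Theory Num.Theory.
Import numFieldNormedType.Exports.

Local Open Scope nat_scope.

Lemma ffact_ge (t n : nat) : (n - t) ^ t <= n ^_ t.
Proof.
elim: t n => [|t IH] n; first by rewrite ffactn0 expn0.
rewrite ffactnS expnS.
have e : n - t.+1 = n.-1 - t by lia.
rewrite e; apply: leq_mul; first by lia.
exact: IH.
Qed.

Lemma leq_expR (m n e : nat) : m <= n -> m ^ e <= n ^ e.
Proof. move=> mn; elim: e => [|e IH]; first by rewrite !expn0.
by rewrite !expnS leq_mul. Qed.

Lemma ffact_le (t n : nat) : n ^_ t <= n ^ t.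
Proof.
elim: t n => [|t IH] n; first by rewrite ffactn0 expn0.
rewrite ffactnS expnS; apply: leq_mul => //.
apply: leq_trans (IH _) _; apply: leq_expR; lia.
Qed.

Definition Mbound (k t : nat) := 2 * k * t.-1 * (2 * k * (t + 2)) ^ t.-1.

Lemma kst_arith (k t h n : nat) : 0 < k -> 0 < t -> n <= 2 * k * h ->
  2 * k * (Mbound k t + t + 1) <= n ->
  t.-1 * 'C(n, t) < h * 'C(n %/ (2 * k), t).
Proof.
move=> k0 t0 nh nM.
set d := n %/ (2 * k).
have tf : 0 < t`! by apply: fact_gt0.
rewrite -(ltn_pmul2r tf) -mulnA bin_ffact -mulnA bin_ffact.
case: t t0 nM tf => // t' _ nM _.
set D := d - t'.+1.
have n0 : 0 < n by lia.
have h0 : 0 < h by nia.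
have dM : Mbound k t'.+1 < D.
  have : Mbound k t'.+1 + t'.+1 + 1 <= d.
    by rewrite /d leq_divRL ?muln_gt0 // mulnC.
  rewrite /D; lia.
set c := 2 * k * (t'.+1 + 2).
have nD : n <= c * D.
  have : n < 2 * k * (d + 1) by rewrite /d; lia.
  rewrite /c /D => H.
  have D1 : 1 <= D by lia.
  have : d + 1 <= (t'.+1 + 2) * (d - t'.+1) by nia.
  move=> H2; apply: leq_trans (ltnW H) _.
  by rewrite -[X in _ <= X]mulnA leq_mul2l H2 orbT.
apply: (@leq_ltn_trans (t' * n ^ t'.+1)).
  by rewrite /= leq_mul2l ffact_le orbT.
apply: (@leq_trans (h * D ^ t'.+1)); last first.
  by rewrite leq_mul2l ffact_ge orbT.
rewrite (expnS n) (expnS D).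
have hD : t' * n * c ^ t' < h * D.
  apply: (@leq_ltn_trans (Mbound k t'.+1 * h)); last first.
    by rewrite mulnC ltn_pmul2l.
  rewrite /Mbound /= -/c.
  have : t' * n <= 2 * k * t' * h by nia.
  move=> H; rewrite [X in _ <= X]mulnAC leq_mul2r H orbT //.
have Dt : n ^ t' <= c ^ t' * D ^ t'.
  by rewrite -expnMn leq_expR.
have DtP : 0 < D ^ t' by rewrite expn_gt0; lia.
rewrite mulnA (mulnA h).
apply: (leq_ltn_trans (leq_mul (leqnn (t' * n)) Dt)).
by rewrite mulnA ltn_pmul2r.
Qed.

Local Open Scope nat_scope.

Lemma sum_bool (I : finType) (P Q : pred I) :
  \sum_(i | P i) (Q i : nat) = #|[set i | P i && Q i]|.
Proof.
rewrite -sum1_card big_mkcond [RHS]big_mkcond /=; apply: eq_bigr => i _.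
by rewrite inE; case: (P i); case: (Q i).
Qed.

Lemma kst (n k t : nat) (adj : rel 'I_n) :
  0 < k -> 0 < t -> (forall v, ~~ adj v v) ->
  2 * k * (Mbound k t + t + 1) <= n ->
  n * n <= k * \sum_(v : 'I_n) #|[set u | adj v u]| ->
  exists T Y : {set 'I_n},
    [/\ #|T| = t, t <= #|Y| & forall y x, y \in Y -> x \in T -> adj y x].
Proof.
move=> k0 t0 irr nM Hsum.
set N := fun v => [set u | adj v u].
set deg := fun v => #|N v|.
have n0 : 0 < n by lia.
set high := [set v : 'I_n | n <= 2 * k * deg v].
set h := #|high|.
have degn : forall v, deg v <= n.
  by move=> v; rewrite /deg -[X in _ <= X]card_ord max_card.
have nh : n <= 2 * k * h.
  have s1 : \sum_(v in high) deg v <= h * n.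
    rewrite -sum_nat_const; apply: leq_sum => v _; exact: degn.
  have s2 : 2 * k * \sum_(v in ~: high) deg v <= n * n.
    rewrite big_distrr /=. apply: (@leq_trans (\sum_(v in ~: high) n)).
      apply: leq_sum => v; rewrite !inE -ltnNge; lia.
    rewrite sum_nat_const leq_mul2r; apply/orP; right.
    by apply: leq_trans (max_card _) _; rewrite card_ord.
  have e : \sum_v deg v = \sum_(v in high) deg v + \sum_(v in ~: high) deg v.
    rewrite (bigID (mem high)) /=; congr (_ + _); apply: eq_bigl => v; rewrite finset.in_setC //.
  have Hs : n * n <= k * \sum_v deg v by [].
  rewrite e in Hs.
  have s1' := leq_mul (leqnn (2 * k)) s1.
  have : n * n <= 2 * k * h * n by nia.
  rewrite [X in _ <= X]mulnC leq_pmul2l //.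
set d := n %/ (2 * k).
have key := kst_arith k0 t0 nh nM.
set Y := fun T : {set 'I_n} => [set v | T \subset N v].
case: (boolP [exists T : {set 'I_n}, (#|T| == t) && (t <= #|Y T|)]).
  case/existsP => T /andP [/eqP HT HY]; exists T, (Y T); split => // y x.
  by rewrite inE => /fintype.subsetP sub /sub; rewrite inE.
move=> /existsPn Hno; exfalso.
have lhs : \sum_(T : {set 'I_n} | #|T| == t) #|Y T| <= t.-1 * 'C(n, t).
  apply: (@leq_trans (\sum_(T : {set 'I_n} | #|T| == t) t.-1)).
    apply: leq_sum => T HT; move: (Hno T); rewrite HT /= -ltnNge; lia.
  rewrite sum_nat_const mulnC leq_mul2l; apply/orP; right.
  by rewrite -cardsE card_draws card_ord.
have eqs : \sum_(T : {set 'I_n} | #|T| == t) #|Y T| = \sum_v 'C(deg v, t).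
  transitivity (\sum_(T : {set 'I_n} | #|T| == t) \sum_v ((T \subset N v) : nat)).
    by apply: eq_bigr => T _; rewrite sum_bool; apply: eq_card => v; rewrite !inE.
  rewrite exchange_big /=; apply: eq_bigr => v _.
  by rewrite sum_bool /deg -cards_draws; apply: eq_card => T; rewrite !inE andbC.
have rhs : h * 'C(d, t) <= \sum_v 'C(deg v, t).
  apply: (@leq_trans (\sum_(v in high) 'C(deg v, t))).
    rewrite -sum_nat_const; apply: leq_sum => v; rewrite inE => Hv; apply: leq_bin2l.
    apply: (leq_trans (leq_div2r (2 * k) Hv)); rewrite mulKn // muln_gt0 //.
  by rewrite big_mkcond; apply: leq_sum => v _; case: ifP.
move: key; rewrite ltnNge => /negP; apply.
by apply: leq_trans rhs _; rewrite -eqs.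
Qed.

Local Open Scope nat_scope.

Lemma inj_into (V T : finType) (X : {set T}) :
  #|V| <= #|X| -> exists g : V -> T, injective g /\ forall v, g v \in X.
Proof.
move=> le; exists (fun v => enum_val (widen_ord le (enum_rank v))); split.
  move=> u w /enum_val_inj /(congr1 val) /= /val_inj /enum_rank_inj //.
by move=> v; apply: enum_valP.
Qed.

Lemma card_pair_cap (T : finType) (u w : T) (A : {set T}) : u != w ->
  #|[set u; w] :&: A| = ((u \in A) + (w \in A))%N.
Proof.
move=> uw; case uA: (u \in A); case wA: (w \in A) => /=.
- rewrite (finset.setIidPl _) ?cards2 ?uw //.
  by rewrite finset.subUset !finset.sub1set uA wA.
- have -> : [set u; w] :&: A = [set u].
    apply/setP => x; rewrite !inE; have [->|xu] := eqVneq x u; rewrite ?eqxx ?uA ?wA ?(negbTE uw) //=; have [->|xw] := eqVneq x w; rewrite ?eqxx ?uA ?wA ?(negbTE xu) ?(negbTE xw) ?(negbTE (nesym uw)) //=.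
  by rewrite cards1.
- have -> : [set u; w] :&: A = [set w].
    apply/setP => x; rewrite !inE; have [->|xu] := eqVneq x u; rewrite ?eqxx ?uA ?wA ?(negbTE uw) //=; have [->|xw] := eqVneq x w; rewrite ?eqxx ?uA ?wA ?(negbTE xu) ?(negbTE xw) ?(negbTE (nesym uw)) //=.
  by rewrite cards1.
- have -> : [set u; w] :&: A = finset.set0.
    apply/setP => x; rewrite !inE; have [->|xu] := eqVneq x u; rewrite ?eqxx ?uA ?wA ?(negbTE uw) //=; have [->|xw] := eqVneq x w; rewrite ?eqxx ?uA ?wA ?(negbTE xu) ?(negbTE xw) ?(negbTE (nesym uw)) //=.
  by rewrite cards0.
Qed.

Lemma embed_lemma (V : finType) (E : {set {set V}}) (n : nat)
  (G : {set {set 'I_n}}) (A : {set V}) (T Y : {set 'I_n}) :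
  (forall F, F \in E -> #|F| = 1%N \/ #|F| = 2%N) ->
  (forall F, F \in E -> #|F| = 2%N -> #|F :&: A| = 1%N) ->
  #|V| <= #|T| -> #|V| <= #|Y| ->
  (forall v, v \in T -> v \in Y -> False) ->
  (forall y x, y \in Y -> x \in T -> [set y; x] \in G) ->
  (forall v, v \in T :|: Y -> [set v] \in G) ->
  subgraphb E G.
Proof.
move=> Esz Ebip VT VY disj edge sing.
have [g1 [g1i g1T]] := inj_into VT.
have [g2 [g2i g2Y]] := inj_into VY.
pose f v := if v \in A then g1 v else g2 v.
have fTY : forall v, f v \in T :|: Y.
  by move=> v; rewrite /f inE; case: (v \in A); rewrite ?g1T ?g2Y ?orbT.
apply/existsP; exists [ffun v => f v]; apply/andP; split.
  apply/injectiveP => u w; rewrite !ffunE /f.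
  case: (u \in A); case: (w \in A) => e.
  - exact: g1i.
  - by exfalso; apply: (disj (g1 u)); rewrite ?g1T // e g2Y.
  - by exfalso; apply: (disj (g1 w)); rewrite ?g1T // -e g2Y.
  - exact: g2i.
apply/forallP => F; apply/implyP => HF.
case: (Esz F HF) => [/eqP/cards1P [v ->]|H2].
  by rewrite imset_set1 ffunE; apply: sing.
have := Ebip F HF H2; move: H2 => /eqP/cards2P [u [w [uw ->]]].
rewrite card_pair_cap // imsetU1 imset_set1 !ffunE /f.
case uA: (u \in A); case wA: (w \in A) => //= _.
  by rewrite finset.setUC; apply: edge; rewrite ?g1T ?g2Y.
by apply: edge; rewrite ?g1T ?g2Y.
Qed.

Local Open Scope nat_scope.

Definition SG n (G : {set {set 'I_n}}) : {set 'I_n} := [set v | [set v] \in G].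
Definition E2 n (G : {set {set 'I_n}}) : {set {set 'I_n}} := [set F in G | #|F| == 2%N].
Definition Ed2 n (G : {set {set 'I_n}}) : {set {set 'I_n}} :=
  [set F in G | (#|F| == 2%N) && (F \subset SG G)].

Lemma count_e2 n (G : {set {set 'I_n}}) :
  (#|E2 G| + 'C(#|SG G|, 2) <= #|Ed2 G| + 'C(n, 2))%N.
Proof.
set K2 := [set F : {set 'I_n} | #|F| == 2%N].
set KS := [set F : {set 'I_n} | F \subset SG G & #|F| == 2%N].
have sub : E2 G \subset Ed2 G :|: (K2 :\: KS).
  apply/fintype.subsetP => F; rewrite !inE => /andP [FG F2].
  by rewrite FG F2 /=; case: (F \subset SG G).
have cK2 : #|K2| = 'C(n, 2) by rewrite card_draws card_ord.
have cKS : #|KS| = 'C(#|SG G|, 2) by rewrite cards_draws.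
have KSK2 : KS \subset K2 by apply/fintype.subsetP => F; rewrite !inE => /andP [].
have cD : #|K2 :\: KS| = (#|K2| - #|KS|)%N.
  by rewrite cardsD (finset.setIidPr KSK2).
have h1 : (#|E2 G| <= #|Ed2 G| + ('C(n,2) - 'C(#|SG G|,2)))%N.
  rewrite -cK2 -cKS -cD; apply: leq_trans (subset_leq_card sub) (leq_card_setU _ _).
have h2 : ('C(#|SG G|,2) <= 'C(n,2))%N by rewrite -cK2 -cKS; exact: subset_leq_card.
lia.
Qed.

Lemma cardS_eq n (G : {set {set 'I_n}}) :
  #|[set F in G | #|F| == 1%N]| = #|SG G|.
Proof.
have -> : [set F in G | #|F| == 1%N] = [set [set v] | v in SG G].
  apply/setP => F; apply/idP/idP.
    rewrite inE => /andP [FG /cards1P [v Fv]]; subst F.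
    by apply: imset_f; rewrite /SG inE.
  by case/imsetP => v; rewrite /SG inE => vG ->; rewrite inE vG cards1.
by rewrite card_imset //; apply: set1_inj.
Qed.

Lemma deg_sum n (G : {set {set 'I_n}}) :
  (#|Ed2 G| <= \sum_(v : 'I_n) #|[set u | [set v; u] \in Ed2 G]|)%N.
Proof.
set P := [set p : 'I_n * 'I_n | [set p.1; p.2] \in Ed2 G].
have -> : (\sum_(v : 'I_n) #|[set u | [set v; u] \in Ed2 G]|)%N = #|P|.
  transitivity (\sum_(v : 'I_n) \sum_(u : 'I_n) (([set v; u] \in Ed2 G) : nat))%N.
    apply: eq_bigr => v _; rewrite sum_bool; apply: eq_card => u; rewrite !inE //.
  rewrite pair_big /= sum_bool; apply: eq_card => p; rewrite !inE //.
apply: (@leq_trans #|[set [set p.1; p.2] | p in P]|); last exact: leq_imset_card.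
apply: subset_leq_card; apply/fintype.subsetP => F FE.
have := FE; rewrite inE => /andP [_ /andP [/cards2P [x [y [_ Fxy]]] _]].
by apply/imsetP; exists (x, y); rewrite // inE /= -Fxy.
Qed.

Local Open Scope ring_scope.
Lemma h_formula (R : realType) n (G : {set {set 'I_n}}) :
  (forall F, F \in G -> #|F| = 1%N \/ #|F| = 2%N) ->
  h_n R G = (#|SG G|)%:R / n%:R + (#|E2 G|)%:R / ('C(n, 2))%:R.
Proof.
move=> Hsz.
rewrite /h_n. rewrite (bigID (fun F : {set _} => #|F| == 1%N)) /=.
congr (_ + _).
  rewrite -cardS_eq.
  transitivity (\sum_(F in [set F in G | #|F| == 1%N]) (n%:R)^-1 : R).
    apply: eq_big => F; first by rewrite inE.
    by move=> /andP [_ /eqP ->]; rewrite bin1.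
  by rewrite sumr_const [RHS]mulrC mulr_natr.
transitivity (\sum_(F in E2 G) (('C(n, 2))%:R)^-1 : R).
  apply: eq_big => F.
    rewrite /E2 inE; case FG: (F \in G) => //=.
    by case: (Hsz F FG) => ->.
  by move=> /andP [FG]; case: (Hsz F FG) => -> //.
by rewrite sumr_const [RHS]mulrC mulr_natr.
Qed.

Local Open Scope ring_scope.

Lemma real_ineq (R : realType) (n s e2 E m : R) :
  1 <= m -> m + 2 <= n -> 0 <= s -> s <= n -> 0 <= e2 ->
  e2 + s * (s - 1) / 2 <= E + n * (n - 1) / 2 ->
  5 / 4 + m^-1 < s / n + e2 / (n * (n - 1) / 2) ->
  n ^+ 2 <= 4 * m * E.
Proof.
move=> m1 mn s0 sn e0 hc hh.
have n0 : 0 < n by lra.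
have Cn0 : 0 < n * (n - 1) / 2 by apply: divr_gt0 => //; nra.
have m0 : 0 < m by lra.
set im := m^-1 in hh.
have mim : m * im = 1 by rewrite /im mulfV //; lra.
have im0 : 0 < im by rewrite /im invr_gt0.
have H2 : (5 / 4 + im) * (n * (n - 1) / 2) < s * (n - 1) / 2 + e2.
  move: hh; rewrite -(ltr_pM2r Cn0).
  have -> : (s / n + e2 / (n * (n - 1) / 2)) * (n * (n - 1) / 2) = s * (n - 1) / 2 + e2.
    field; lra.
  by [].
have H3 : 2 * E >= (n / 2 - s) ^+ 2 - n / 4 + (n ^+ 2 - n) * im by nra.
have H4 : 4 * m * E >= 2 * m * (n / 2 - s) ^+ 2 - m * n / 2 + 2 * (n ^+ 2 - n) * (m * im) by nra.
rewrite mim in H4.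
have H5 : 0 <= 2 * m * (n / 2 - s) ^+ 2 by apply: mulr_ge0; [lra| apply: sqr_ge0].
have H6 : 0 <= n * (n - 2 - m / 2) by apply: mulr_ge0; lra.
nra.
Qed.

Lemma real_lb (R : realType) (n s : R) :
  2 <= n -> 0 <= s -> (n - 2 * s) * (n - 2 * s - 1) = 0 ->
  5 / 4 <= s / n + (n * (n - 1) / 2 - s * (s - 1) / 2) / (n * (n - 1) / 2).
Proof.
move=> n2 s0 hn.
have nn : 0 < n * (n - 1) by nra.
have -> : s / n + (n * (n - 1) / 2 - s * (s - 1) / 2) / (n * (n - 1) / 2)
  = (s * (n - 1) + n * (n - 1) - s * (s - 1)) / (n * (n - 1)).
  field; nra.
rewrite ler_pdivlMr //.
nra.
Qed.

Local Open Scope nat_scope.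

Lemma bin2_mul2 n : ('C(n, 2) * 2 = n * n.-1)%N.
Proof.
elim: n => [|n IH] //; rewrite binS bin1 mulnDl IH /=.
case: n IH => [|n] _ //=; lia.
Qed.

Local Open Scope ring_scope.
Lemma binr2 (R : realType) n : ('C(n, 2))%:R = n%:R * (n%:R - 1) / 2 :> R.
Proof.
have h := bin2_mul2 n.
case: n h => [|n] h; first by rewrite bin_small // mul0r mul0r.
have e : ('C(n.+1, 2))%:R * 2%:R = (n.+1)%:R * n%:R :> R by rewrite -!natrM h.
have e2 : (n.+1)%:R = n%:R + 1 :> R by rewrite mulrSr.
rewrite e2 in e *.
have -> : (n%:R + 1 - 1 : R) = n%:R by rewrite addrK.
nra.
Qed.

Lemma half_le n : (n./2 <= n)%N.
Proof. by rewrite leq_half_double -addnn; lia. Qed.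

Definition S0 n : {set 'I_n} := [set widen_ord (half_le n) i | i in 'I_(n./2)].
Definition G0 n : {set {set 'I_n}} :=
  [set [set v] | v in S0 n] :|: [set F : {set 'I_n} | (#|F| == 2%N) && ~~ (F \subset S0 n)].

Lemma card_S0 n : #|S0 n| = n./2.
Proof. rewrite card_imset ?card_ord // => i j /(congr1 val) /= /val_inj //. Qed.

Lemma G0_sizes n F : F \in G0 n -> #|F| = 1%N \/ #|F| = 2%N.
Proof.
rewrite inE => /orP [/imsetP [v _ ->]|]; first by left; rewrite cards1.
by rewrite inE => /andP [/eqP -> _]; right.
Qed.

Lemma G0_single n v : [set v] \in G0 n -> v \in S0 n.
Proof.
rewrite inE => /orP [/imsetP [u uS /set1_inj -> //]|].
by rewrite inE cards1.
Qed.

Lemma SG_G0 n : SG (G0 n) = S0 n.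
Proof.
apply/setP => v; rewrite /SG inE; apply/idP/idP; first exact: G0_single.
by move=> vS; rewrite inE; apply/orP; left; apply: imset_f.
Qed.

Lemma E2_G0 n : E2 (G0 n) = [set F : {set 'I_n} | (#|F| == 2%N) && ~~ (F \subset S0 n)].
Proof.
apply/setP => F; rewrite /E2 !inE; apply/idP/idP.
  case/andP => /orP [/imsetP [v _ ->]|]; first by rewrite cards1.
  by [].
by move=> H; rewrite H orbT (proj1 (andP H)).
Qed.

Lemma card_E2_G0 n : #|E2 (G0 n)| = ('C(n, 2) - 'C(n./2, 2))%N.
Proof.
set K2 := [set F : {set 'I_n} | #|F| == 2%N].
set KS := [set F : {set 'I_n} | F \subset S0 n & #|F| == 2%N].
have -> : E2 (G0 n) = K2 :\: KS.
  rewrite E2_G0; apply/setP => F; rewrite !inE.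
  by case: (#|F| == 2%N); rewrite ?andbT ?andbF.
have KSK2 : KS \subset K2 by apply/fintype.subsetP => F; rewrite !inE => /andP [].
rewrite cardsD (finset.setIidPr KSK2) card_draws card_ord cards_draws card_S0 //.
Qed.

Lemma h_G0 (R : realType) n : (2 <= n)%N -> 5 / 4 <= h_n R (G0 n).
Proof.
move=> n2.
rewrite h_formula; last by move=> F; apply: G0_sizes.
rewrite SG_G0 card_S0 card_E2_G0 natrB; last first.
  by apply: leq_bin2l; apply: half_le.
rewrite !binr2.
apply: real_lb.
- by rewrite (ler_nat R 2 n).
- by [].
- have e := odd_double_half n.
  have : (n%:R : R) = (odd n)%:R + 2 * (n./2)%:R.
    by rewrite -{1}e natrD -muln2 natrM mulrC.
  case: (odd n) => /= ->; ring.
Qed.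

Local Open Scope nat_scope.

Section S.
Variables (V : finType) (E : {set {set V}}).
Hypothesis hR : forall k : nat, in_R E k <-> (k = 1%N \/ k = 2%N).

Lemma E_sizes F : F \in E -> #|F| = 1%N \/ #|F| = 2%N.
Proof. by move=> FE; apply/(hR #|F|).1/existsP; exists F; rewrite FE eqxx. Qed.

Lemma G_sizes n (G : {set {set 'I_n}}) F : R_sub G E -> F \in G -> #|F| = 1%N \/ #|F| = 2%N.
Proof. by move=> /forallP /(_ F) /implyP H FG; apply/(hR _).1; apply: H. Qed.

Lemma G0_adm n : R_sub (G0 n) E.
Proof.
apply/forallP => F; apply/implyP => FG; apply/(hR _).2; exact: G0_sizes.
Qed.

Lemma G0_avoid n : subgraphb K2_12 E -> ~~ subgraphb E (G0 n).
Proof.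
case/existsP => g /andP [/injectiveP gi /forallP gE].
apply/negP; case/existsP => f /andP [/injectiveP fi /forallP fG].
have s1 : forall i, [set i] \in K2_12 -> f (g i) \in S0 n.
  move=> i Ki; have := implyP (gE _) Ki; rewrite imset_set1 => Ei.
  by have := implyP (fG _) Ei; rewrite imset_set1; apply: G0_single.
have a0 : f (g ord0) \in S0 n by apply: s1; rewrite /K2_12 !inE eqxx.
have a1 : f (g ord_max) \in S0 n by apply: s1; rewrite /K2_12 !inE eqxx !orbT.
have eT : (finset.setT : {set 'I_2}) = [set ord0; ord_max].
  by apply/setP => i; rewrite !inE; case: i => [[|[|]]] //.
have KT : finset.setT \in K2_12 by rewrite /K2_12 !inE eqxx !orbT.
have := implyP (gE finset.setT) KT.
rewrite eT imsetU1 imset_set1 => Ep.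
have := implyP (fG _) Ep; rewrite imsetU1 imset_set1 !inE => /orP [].
  case/imsetP => v _ /(congr1 (fun X : {set _} => #|X|)).
  rewrite cards1 cards2; case: eqP => // /fi /gi; done.
by rewrite finset.subUset !finset.sub1set a0 a1 andbF.
Qed.

Lemma V_pos : (0 < #|V|)%N.
Proof.
have := (hR 1%N).2 (or_introl erefl); case/existsP => F /andP [_ /cards1P [v _]].
by apply/card_gt0P; exists v.
Qed.

Local Open Scope ring_scope.
Lemma upper (R : realType) (m : nat) : two_graph_bipartite E -> (0 < m)%N ->
  exists N, forall n, (N <= n)%N -> forall G : {set {set 'I_n}},
    R_sub G E -> ~~ subgraphb E G -> h_n R G <= 5 / 4 + (m%:R)^-1.
Proof.
move=> [A hA] m0.
set t := #|V|.
set k := (4 * m)%N.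
exists (maxn (m + 2) (2 * k * (Mbound k t + t + 1))) => n; rewrite geq_max => /andP [nm nK].
move=> G adm avoid.
rewrite leNgt; apply/negP => hh.
have Gsz : forall F, F \in G -> #|F| = 1%N \/ #|F| = 2%N by move=> F; apply: G_sizes.
rewrite h_formula // binr2 in hh.
have cnt := count_e2 G.
have sn : (#|SG G| <= n)%N by rewrite -[X in (_ <= X)%N]card_ord max_card.
have cntR : #|E2 G|%:R + #|SG G|%:R * (#|SG G|%:R - 1) / 2 <=
            #|Ed2 G|%:R + n%:R * (n%:R - 1) / 2 :> R.
  by rewrite -!binr2 -!natrD ler_nat.
have key := @real_ineq R n%:R #|SG G|%:R #|E2 G|%:R #|Ed2 G|%:R m%:R.
have Hn : (n * n <= k * #|Ed2 G|)%N.
  rewrite -(ler_nat R) natrM /k !natrM -expr2; apply: key.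
  - by rewrite (ler_nat R 1 m).
  - by rewrite -natrD ler_nat.
  - by [].
  - by rewrite ler_nat.
  - by [].
  - exact: cntR.
  - exact: hh.
set adj := fun y x : 'I_n => [set y; x] \in Ed2 G.
have irr : forall v, ~~ adj v v.
  by move=> v; rewrite /adj /Ed2 !inE (finset.setUid [set v]) cards1 andbF.
have Hsum : (n * n <= k * \sum_(v : 'I_n) #|[set u | adj v u]|)%N.
  apply: leq_trans Hn _; rewrite leq_mul2l; apply/orP; right; exact: deg_sum.
have k0 : (0 < k)%N by rewrite /k; lia.
have [T [Y [cT cY edge]]] := kst k0 V_pos irr nK Hsum.
have EdS : forall y x, adj y x -> y \in SG G /\ x \in SG G.
  move=> y x; rewrite /adj /Ed2 inE => /andP [_ /andP [_]].
  by rewrite finset.subUset !finset.sub1set => /andP [].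
have Tne : exists x, x \in T.
  by apply/set0Pn; rewrite -card_gt0 cT V_pos.
have Yne : exists y, y \in Y.
  by apply/set0Pn; rewrite -card_gt0; apply: leq_trans V_pos cY.
move/negP: avoid; apply.
apply: (@embed_lemma V E n G A T Y).
- exact: E_sizes.
- exact: hA.
- by rewrite cT.
- exact: cY.
- by move=> v vT vY; move: (edge v v vY vT); rewrite (negbTE (irr v)).
- by move=> y x yY xT; move: (edge y x yY xT); rewrite /adj /Ed2 inE => /andP [].
- move=> v; rewrite inE => /orP [vT|vY].
    have [y yY] := Yne; have [_] := EdS _ _ (edge y v yY vT); by rewrite /SG inE.
  have [x xT] := Tne; have [H _] := EdS _ _ (edge v x vY xT); by rewrite /SG inE in H.
Qed.
End S.

Local Open Scope classical_set_scope.
Local Open Scope ring_scope.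

Theorem mainTheorem8 (R : realType) (V : finType) (E : {set {set V}}) :
  (forall k : nat, in_R E k <-> (k = 1%N \/ k = 2%N)) ->
  two_graph_bipartite E ->
  subgraphb K2_12 E ->
  (fun n : nat => pi_n R E n) @ \oo --> (5 / 4 : R).
Proof.
move=> hR hbip hK.
apply/cvgrPdist_le => e e0.
set m := Num.Def.archi_bound (e^-1).
have hm : e^-1 < m%:R by apply: archi_boundP; rewrite invr_ge0 ltW.
have m0 : (0 < m)%N.
  rewrite -(ltr_nat R); apply: le_lt_trans hm; rewrite invr_ge0 ltW //.
have me : (m%:R)^-1 <= e.
  have mR : 0 < (m%:R : R) by rewrite ltr0n.
  rewrite -(ler_pM2r mR) mulVf ?gt_eqF //.
  move: hm; rewrite -(ltr_pM2l e0) mulfV ?gt_eqF // => /ltW //.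
have [N HN] := upper hR R hbip m0.
apply: filterS (nbhs_infty_ge (maxn N 2)) => n; rewrite geq_max => /andP [nN n2].
have lo : 5 / 4 <= pi_n R E n.
  apply: le_trans (h_G0 R n2) _.
  rewrite /pi_n; apply: (le_bigmax_cond _ (P := fun G => R_sub G E && ~~ subgraphb E G)).
  by rewrite G0_adm // G0_avoid.
have hi : pi_n R E n <= 5 / 4 + (m%:R)^-1.
  rewrite /pi_n; apply: bigmax_le.
    by apply: addr_ge0; rewrite ?invr_ge0 //; lra.
  by move=> G /andP [adm av]; apply: HN.
rewrite ler_norml; apply/andP; split; lra.
Qed.
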